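(* Let $n\ge 4$, $N=\{1,\dots,n\}$, fix $i_1\in N$ and let $\hat N^c=N\setminus\{i_1\}$. Then the inequality $$\sum_{j\in\hat N^c}\left(x_{i_1j}+x_{ji_1}\right)-\sum_{j,j'\in\hat N^c:\,j\ne j'} x_{jj'}\le 2-\frac{(n-2)(n-3)}{2}$$ is a valid inequality for the weak order polytope $P^n_{WO}$, i.e. it holds for every point $x\in P^n_{WO}$.
   Context: Let $N=\{1,\dots,n\}$ and $A_N=\{(i,j): i,j\in N, i\ne j\}$. A weak order on $N$ is a binary relation $W\subseteq N\times N$ that is reflexive, transitive and total; $(i,j)\in W$ is read ''$i$ is preferred over or tied with $j$''. The characteristic vector of $W$ is $x^W\in\{0,1\}^{A_N}$ with $x^W_{(i,j)}=1$ if $(i,j)\in W$ and $0$ otherwise. The weak order polytope $P^n_{WO}$ is the convex hull of the characteristic vectors of all weak orders on $N$; its points are vectors $x\in\mathbb{R}^{A_N}$ and $x_{ij}$ denotes the coordinate $x_{(i,j)}$. *)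

(* Defs.v *)
From mathcomp Require Import all_boot all_order all_algebra.
Set Implicit Arguments. Unset Strict Implicit. Unset Printing Implicit Defensive.
Import Order.TTheory GRing.Theory Num.Theory.
Local Open Scope ring_scope.

Definition weak_order (n : nat) (W : rel 'I_n) : Prop :=
  reflexive W /\ transitive W /\ total W.

Definition char_vec (R : pzRingType) (n : nat) (W : rel 'I_n) (i j : 'I_n) : R :=
  (W i j : nat)%:R.

(* Points of R^{A_N} are represented as x : 'I_n -> 'I_n -> R; only the
   off-diagonal coordinates x i j (i != j) are meaningful.
   x lies in the weak order polytope iff (on A_N) it is a convex combination
   of finitely many characteristic vectors of weak orders. *)
Definition in_weak_order_polytope (R : realFieldType) (n : nat)
  (x : 'I_n -> 'I_n -> R) : Prop :=
  exists (k : nat) (lam : 'I_k -> R) (W : 'I_k -> rel 'I_n),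
    (forall t, weak_order (W t)) /\
    (forall t, 0 <= lam t) /\
    \sum_(t < k) lam t = 1 /\
    (forall i j : 'I_n, i != j -> x i j = \sum_(t < k) lam t * char_vec R (W t) i j).

(* Main.v *)
Require Import Defs.
From mathcomp Require Import all_boot all_order all_algebra.
From mathcomp Require Import zify ring lra.
Import Order.TTheory GRing.Theory Num.Theory.

Lemma vertex n (hn : (4 <= n)%N) (i1 : 'I_n) (W : rel 'I_n) : weak_order W ->
 (2 * \sum_(j < n | j != i1) (W i1 j + W j i1) + (n-2)*(n-3) <=
  4 + 2 * \sum_(j < n | j != i1) \sum_(j' < n | (j' != i1) && (j' != j)) W j j')%N.
Proof.
case=> refl [tr tot].
pose T j := W i1 j && W j i1.
pose m := (\sum_(j < n | j != i1) 1)%N.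
pose t := (\sum_(j < n | j != i1) T j)%N.
have hm : m = n.-1 by rewrite /m sum1_card cardC1 card_ord.
have S1 : (\sum_(j < n | j != i1) (W i1 j + W j i1) = m + t)%N.
  rewrite /m /t -big_split; apply: eq_bigr => j _.
  by rewrite /T; have := tot i1 j; case: (W i1 j); case: (W j i1).
have S2 : (2 * \sum_(j < n | j != i1) \sum_(j' < n | (j' != i1) && (j' != j)) W j j' =
   \sum_(j < n | j != i1) \sum_(j' < n | (j' != i1) && (j' != j)) (W j j' + W j' j))%N.
  rewrite mul2n -addnn.
  have E : forall F : 'I_n -> 'I_n -> nat,
    (\sum_(j < n | j != i1) \sum_(j' < n | (j' != i1) && (j' != j)) F j j' =
     \sum_(j < n) \sum_(j' < n) (if [&& j != i1, j' != i1 & j' != j] then F j j' else 0))%N.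
    move=> F; rewrite big_mkcond; apply: eq_bigr => j _.
    case: (j != i1) => /=; last by rewrite big1.
    by rewrite big_mkcond.
  have Ex : forall G : 'I_n -> 'I_n -> nat, (\sum_(j < n) \sum_(j' < n) G j j' = \sum_(j < n) \sum_(j' < n) G j' j)%N.
    by move=> G; rewrite exchange_big.
  rewrite !E [X in (_ + X)%N]Ex -big_split; apply: eq_bigr => j _; rewrite -big_split; apply: eq_bigr => j' _ /=.
  rewrite [j == j']eq_sym.
  by case: (j != i1); case: (j' != i1); case: (j' != j) => //=; rewrite addn0.
have Hb : (\sum_(j < n | j != i1) \sum_(j' < n | (j' != i1) && (j' != j)) (1 + T j * T j') <=
   \sum_(j < n | j != i1) \sum_(j' < n | (j' != i1) && (j' != j)) (W j j' + W j' j))%N.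
  apply: leq_sum => j _; apply: leq_sum => j' _.
  rewrite /T; have := tot j j'.
  case Ha: (W i1 j); case Hb: (W j i1); case Hc: (W i1 j'); case Hd: (W j' i1) => //=;
  try (by case: (W j j'); case: (W j' j)).
  by rewrite (tr _ _ _ Hb Hc) (tr _ _ _ Hd Ha).
have Hin : forall j, j != i1 ->
  (\sum_(j' < n | (j' != i1) && (j' != j)) (1 + T j * T j') + (1 + T j * T j) = m + T j * t)%N.
  move=> j hj.
  have -> : (\sum_(j' < n | (j' != i1) && (j' != j)) (1 + T j * T j') = \sum_(j' < n | (j' != i1) && (j' != j)) 1 + T j * \sum_(j' < n | (j' != i1) && (j' != j)) T j')%N.
    by rewrite big_split -big_distrr.
  have h1 : m = (1 + \sum_(j' < n | (j' != i1) && (j' != j)) 1)%N by rewrite /m (bigD1 j hj).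
  have h2 : t = (T j + \sum_(j' < n | (j' != i1) && (j' != j)) T j')%N by rewrite /t (bigD1 j hj).
  rewrite h1 h2; case: (T j); lia.
have Hsum : (\sum_(j < n | j != i1) \sum_(j' < n | (j' != i1) && (j' != j)) (1 + T j * T j') + (m + t) = m * m + t * t)%N.
  have -> : (m + t = \sum_(j < n | j != i1) (1 + T j * T j))%N.
    rewrite /m /t -big_split; apply: eq_bigr => j _; by case: (T j).
  rewrite -big_split /= (eq_bigr (fun j => m + T j * t)%N); last by move=> j hj; exact: Hin.
  rewrite big_split /= -big_distrl /= -/t.
  by rewrite -[X in (_ = X * _ + _)%N]/m sum_nat_const  /m sum1_card.
rewrite S1 S2.
move: Hb Hsum hm; set X := (\sum_(j < n | j != i1) \sum_(j' < n | _) (1 + _)%N).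
set Y := (\sum_(j < n | j != i1) \sum_(j' < n | _) _)%N.
move=> Hb Hsum hm.
clearbody X Y.
have hn' : n = m.+1 by rewrite hm; lia.
rewrite hn' in hn *.
clear S1 Hin; clearbody m t.
case: t Hsum => [|[|k]] Hsum; nia.
Qed.

Local Open Scope ring_scope.

Lemma vertexR (R : realFieldType) n (hn : (4 <= n)%N) (i1 : 'I_n) (W : rel 'I_n) : weak_order W ->
  (\sum_(j < n | j != i1) (W i1 j + W j i1))%N%:R -
  (\sum_(j < n | j != i1) \sum_(j' < n | (j' != i1) && (j' != j)) W j j')%N%:R
  <= 2 - (n%:R - 2) * (n%:R - 3) / 2 :> R.
Proof.
move=> hW; have := @vertex _ hn i1 _ hW.
set a := (\sum_(j < n | j != i1) _)%N.
set b := (\sum_(j < n | j != i1) _)%N.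
rewrite -(ler_nat R) natrD !natrM natrD natrM natrB; last by lia.
rewrite natrB; last by lia.
move=> H; lra.
Qed.

Theorem mainTheorem1 (R : realFieldType) (n : nat) (hn : (4 <= n)%N)
  (i1 : 'I_n) (x : 'I_n -> 'I_n -> R) :
  in_weak_order_polytope x ->
  \sum_(j < n | j != i1) (x i1 j + x j i1)
  - \sum_(j < n | j != i1) \sum_(j' < n | (j' != i1) && (j' != j)) x j j'
  <= 2 - (n%:R - 2) * (n%:R - 3) / 2.
Proof.
move=> [k [lam [W [hW [hlam [hsum hx]]]]]].
have E1 : \sum_(j < n | j != i1) (x i1 j + x j i1) =
  \sum_(s < k) lam s * (\sum_(j < n | j != i1) (W s i1 j + W s j i1))%N%:R.
  transitivity (\sum_(j < n | j != i1) \sum_(s < k) lam s * (W s i1 j + W s j i1)%N%:R).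
    apply: eq_bigr => j hj; rewrite hx 1?eq_sym // hx // -big_split.
    by apply: eq_bigr => s _; rewrite /char_vec natrD mulrDr.
  rewrite exchange_big; apply: eq_bigr => s _.
  by rewrite natr_sum mulr_sumr.
have E2 : \sum_(j < n | j != i1) \sum_(j' < n | (j' != i1) && (j' != j)) x j j' =
  \sum_(s < k) lam s * (\sum_(j < n | j != i1) \sum_(j' < n | (j' != i1) && (j' != j)) W s j j')%N%:R.
  transitivity (\sum_(j < n | j != i1) \sum_(s < k) lam s * (\sum_(j' < n | (j' != i1) && (j' != j)) W s j j')%N%:R).
    apply: eq_bigr => j hj.
    transitivity (\sum_(j' < n | (j' != i1) && (j' != j)) \sum_(s < k) lam s * (W s j j')%N%:R).
      apply: eq_bigr => j' /andP[_ hj'].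
      by rewrite hx // eq_sym.
    rewrite exchange_big; apply: eq_bigr => s _.
    by rewrite natr_sum mulr_sumr.
  rewrite exchange_big; apply: eq_bigr => s _.
  by rewrite natr_sum mulr_sumr.
rewrite E1 E2 -sumrB.
apply: le_trans (_ : \sum_(s < k) lam s * (2 - (n%:R - 2) * (n%:R - 3) / 2) <= _).
  apply: ler_sum => s _; rewrite -mulrBr; apply: ler_wpM2l; first exact: hlam.
  exact: vertexR.
by rewrite -mulr_suml hsum mul1r.
Qed.
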